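(* For every integer $R\ge 2$, the $R$-counterwall $G_R$ has no $K_6$ minor.
   Context: Let $W_e$ be the elementary wall of height $R$: from the graph with vertex set $\{1,\dots,2R\}\times\{1,\dots,R\}$, with edges $(i,j)(i+1,j)$ for $1\le i<2R$ and $(i,j)(i,j+1)$ for $1\le j<R$ with $i+j$ even, delete the vertices of degree $1$; draw it in the plane with first coordinate increasing to the right and second coordinate increasing upward. Its bricks are the facial $6$-cycles; each brick consists of a bottom path $x_1x_2x_3$ (left to right, in the lower row), a top path $y_1y_2y_3$ (left to right, in the upper row), and the vertical edges $x_1y_1$, $x_3y_3$. The $R$-counterwall $G_R$ is obtained from $W_e$ by doing the following for every brick $B$ (with $\omega_B=y_3$ its top right corner): subdivide the edge $x_2x_3$ by four new vertices $\alpha_B,\beta_B,\gamma_B,\delta_B$ appearing in this order from $x_2$ to $x_3$, and add the six edges $\omega_B\alpha_B$, $\omega_B\beta_B$, $\omega_B\gamma_B$, $\omega_B\delta_B$, $\alpha_B\gamma_B$, $\beta_B\delta_B$. (Each horizontal edge is the bottom edge of at most one brick, so this is well defined.) Each brick together with its four new vertices and six new edges is called a full brick. *)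

(* Defs.v *)
From mathcomp Require Import all_boot.
Set Implicit Arguments. Unset Strict Implicit. Unset Printing Implicit Defensive.

Definition induced_rel (V : finType) (e : rel V) (A : {set V}) : rel V :=
  [rel x y | [&& x \in A, y \in A & e x y]].

Definition connected_set (V : finType) (e : rel V) (A : {set V}) : Prop :=
  forall x y, x \in A -> y \in A -> connect (induced_rel e A) x y.

Definition has_clique_minor (V : finType) (S : {set V}) (e : rel V) (t : nat)
  : Prop :=
  exists B : 'I_t -> {set V},
    [/\ forall k, B k != set0,
        forall k, B k \subset S,
        forall k, connected_set e (B k),
        forall k l, k != l -> [disjoint B k & B l]
      & forall k l, k != l ->
          exists x y, [/\ x \in B k, y \in B l & e x y]].

(* The elementary wall of height R.  A grid point u : 'I_(2R) * 'I_R   *)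
(* stands for the point (col u, row u) with 1 <= col u <= 2R and       *)
(* 1 <= row u <= R (1-based, as in the paper).                         *)

Section Counterwall.
Variable R : nat.

Definition gpt := ('I_(2 * R) * 'I_R)%type.
Definition col (u : gpt) : nat := (nat_of_ord u.1).+1.
Definition row (u : gpt) : nat := (nat_of_ord u.2).+1.

Definition grid_e (u v : gpt) : bool :=
  ((row u == row v) && ((col u + 1 == col v) || (col v + 1 == col u)))
  || ((col u == col v) &&
      (((row u + 1 == row v) && ~~ odd (col u + row u))
       || ((row v + 1 == row u) && ~~ odd (col v + row v)))).

Definition grid_deg (u : gpt) : nat := #|[set v | grid_e u v]|.

Definition wall_vertex (u : gpt) : bool := grid_deg u != 1.

(* b is the bottom-left corner x1 of a brick (x1 = (i,j), bottom path
   (i,j)(i+1,j)(i+2,j), top path (i,j+1)(i+1,j+1)(i+2,j+1), vertical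
   edges at columns i and i+2, so i+j even) *)
Definition is_brick (b : gpt) : bool :=
  [&& col b + 2 <= 2 * R, row b < R & ~~ odd (col b + row b)].

Definition is_x2 (b u : gpt) : bool := (col u == col b + 1) && (row u == row b).
Definition is_x3 (b u : gpt) : bool := (col u == col b + 2) && (row u == row b).
Definition is_omega (b u : gpt) : bool :=
  (col u == col b + 2) && (row u == row b + 1).

Definition subdivided (u v : gpt) : bool :=
  [exists b, is_brick b && ((is_x2 b u && is_x3 b v) || (is_x2 b v && is_x3 b u))].

(* Vertices of G_R: wall grid points, and new vertices (b, k) for each
   brick b, with k = 0,1,2,3 standing for alpha_b, beta_b, gamma_b, delta_b. *)
Definition cvertex := (gpt + gpt * 'I_4)%type.

Definition cw_vertices : {set cvertex} :=
  [set x | match x with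
           | inl u => wall_vertex u
           | inr (b, _) => is_brick b
           end].

Definition mixed_e (u : gpt) (b : gpt) (k : 'I_4) : bool :=
  [&& wall_vertex u, is_brick b &
      [|| is_x2 b u && (nat_of_ord k == 0),
          is_x3 b u && (nat_of_ord k == 3) | is_omega b u]].

Definition cw_e (x y : cvertex) : bool :=
  match x, y with
  | inl u, inl v => [&& wall_vertex u, wall_vertex v, grid_e u v & ~~ subdivided u v]
  | inl u, inr (b, k) => mixed_e u b k
  | inr (b, k), inl u => mixed_e u b k
  | inr (b, k), inr (b', k') =>
      (* new-new edges: alpha-beta, beta-gamma, gamma-delta (the path),
         alpha-gamma, beta-delta: all pairs except alpha-delta *)
      [&& is_brick b, b == b', k != k' &
          ~~ ((nat_of_ord k + nat_of_ord k' == 3) && ((nat_of_ord k == 0) || (nat_of_ord k' == 0)))]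
  end.

End Counterwall.

(* Main.v *)
Require Import Defs.
From mathcomp Require Import all_boot zify ring.
Require Import Defs.
Set Implicit Arguments. Unset Strict Implicit. Unset Printing Implicit Defensive.


Definition chiN (ux uy vx vy wx wy : nat) : bool :=
  if uy.+1 == vy then (uy == wy) && (ux < wx)
  else if vy.+1 == uy then (vy == wy) && (vx < wx) else false.
Definition ltN (ux uy wx wy : nat) : bool := (uy < wy) || ((uy == wy) && (ux < wx)).
Definition tadjN (ux uy vx vy : nat) : bool :=
  [|| (ux == vx) && (uy == vy), (uy == vy) && (ux.+1 == vx), (uy==vy) && (vx.+1 == ux),
      (ux == vx) && (uy.+1 == vy), (ux==vx) && (vy.+1 == uy), (ux.+1 == vx) && (uy.+1 == vy)
    | (vx.+1 == ux) && (vy.+1 == uy)].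

Ltac dec1 := match goal with
 | |- context [?a == ?b :> nat] =>
     first [ rewrite (_ : (a == b) = true); last (apply/eqP; lia)
           | rewrite (_ : (a == b) = false); last (apply/negbTE/eqP; lia)
           | case: (eqVneq a b) => ? ]
 | |- context [?a <= ?b] =>
     first [ rewrite (_ : (a <= b) = true); last lia
           | rewrite (_ : (a <= b) = false); last (apply/negbTE; lia)
           | case: (leqP a b) => ? ]
 end.

Lemma local (ux uy vx vy cx cy dx dy : nat) :
  tadjN ux uy vx vy -> tadjN cx cy dx dy ->
  ~ (ux = cx /\ uy = cy) -> ~ (ux = dx /\ uy = dy) ->
  ~ (vx = cx /\ vy = cy) -> ~ (vx = dx /\ vy = dy) ->
  ~~ odd (chiN ux uy vx vy cx cy + chiN ux uy vx vy dx dy + chiN cx cy dx dy ux uy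
          + chiN cx cy dx dy vx vy + ltN cx cy ux uy + ltN dx dy ux uy
          + ltN cx cy vx vy + ltN dx dy vx vy).
Proof.
rewrite /tadjN /chiN /ltN.
case/or4P => [/andP[/eqP e1 /eqP e2]|/andP[/eqP e1 /eqP e2]|/andP[/eqP e1 /eqP e2]|/or4P[/andP[/eqP e1 /eqP e2]|/andP[/eqP e1 /eqP e2]|/andP[/eqP e1 /eqP e2]|/andP[/eqP e1 /eqP e2]]]; subst;
case/or4P => [/andP[/eqP e3 /eqP e4]|/andP[/eqP e3 /eqP e4]|/andP[/eqP e3 /eqP e4]|/or4P[/andP[/eqP e3 /eqP e4]|/andP[/eqP e3 /eqP e4]|/andP[/eqP e3 /eqP e4]|/andP[/eqP e3 /eqP e4]]]; subst => h1 h2 h3 h4;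
 repeat dec1; try done; lia.
Qed.


Definition tadj {R} (u v : gpt R) := tadjN (col u) (row u) (col v) (row v).
Definition chi {R} (u v w : gpt R) := chiN (col u) (row u) (col v) (row v) (col w) (row w).
Definition ltp {R} (u w : gpt R) := ltN (col u) (row u) (col w) (row w).

Fixpoint X {R} (x : gpt R) (p : seq (gpt R)) (w : gpt R) : nat :=
  if p is y :: p' then chi x y w + X y p' w else 0.

Lemma gpt_eq {R} (u v : gpt R) : col u = col v -> row u = row v -> u = v.
Proof.
case: u v => [a b] [c d]; rewrite /col /row /= => [[h1] [h2]].
by congr pair; apply: val_inj.
Qed.

Lemma even_comb a b c k : ~~ odd a -> ~~ odd b -> a + b = c + 2 * k -> ~~ odd c.
Proof.
move=> ha hb e; have: ~~ odd (a + b) by rewrite oddD (negbTE ha) (negbTE hb).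
by rewrite e oddD mul2n odd_double addbF.
Qed.

Lemma even2 c k : c = 2 * k -> ~~ odd c.
Proof. by move=> ->; rewrite mul2n odd_double. Qed.

Lemma local_gpt {R} (u v c d : gpt R) : tadj u v -> tadj c d ->
  u != c -> u != d -> v != c -> v != d ->
  ~~ odd (chi u v c + chi u v d + chi c d u + chi c d v + ltp c u + ltp d u + ltp c v + ltp d v).
Proof.
move=> h1 h2 n1 n2 n3 n4; apply: local => // -[e1 e2].
- by move/eqP: n1; apply; apply: gpt_eq.
- by move/eqP: n2; apply; apply: gpt_eq.
- by move/eqP: n3; apply; apply: gpt_eq.
- by move/eqP: n4; apply; apply: gpt_eq.
Qed.

Lemma EW {R} (u v c : gpt R) q : tadj u v -> path tadj c q ->
  u \notin c :: q -> v \notin c :: q ->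
  ~~ odd (X c q u + X c q v + chi u v c + chi u v (last c q)
          + ltp c u + ltp (last c q) u + ltp c v + ltp (last c q) v).
Proof.
move=> huv; elim: q c => [|y q IH] c /=.
  move=> _ _ _; apply: (@even2 _ (chi u v c + ltp c u + ltp c v)); rewrite /=; ring.
case/andP=> hcy hp; rewrite in_cons negb_or => /andP[nuc nu].
rewrite in_cons negb_or => /andP[nvc nv].
have L := local_gpt huv hcy nuc _ nvc _.
move: (nu) (nv); rewrite in_cons negb_or => /andP[nuy _].
rewrite in_cons negb_or => /andP[nvy _].
have {L} L := L nuy nvy.
have I := IH y hp nu nv.
apply: (even_comb (k := chi u v y + ltp y u + ltp y v) L I); rewrite /=; ring.
Qed.

Lemma mem_head2 (T : eqType) (a y : T) p : y \in a :: y :: p.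
Proof. by rewrite !inE eqxx orbT. Qed.

Lemma WW {R} (a c : gpt R) p q : path tadj a p -> path tadj c q ->
  (forall x, x \in a :: p -> x \notin c :: q) ->
  ~~ odd (X a p c + X a p (last c q) + X c q a + X c q (last a p)
          + ltp c a + ltp (last c q) a + ltp c (last a p) + ltp (last c q) (last a p)).
Proof.
move=> + hq; elim: p a => [|y p IH] a /=.
  move=> _ _; apply: (@even2 _ (X c q a + ltp c a + ltp (last c q) a)); rewrite /=; ring.
case/andP=> hay hp hd.
have E := EW hay hq (hd a (mem_head _ _)) (hd y (mem_head2 _ _ _)).
have I := IH y hp (fun x hx => hd x (@mem_behead _ (a :: y :: p) x hx)).
apply: (even_comb (k := X c q y + ltp c y + ltp (last c q) y) E I); rewrite /=; ring.
Qed.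


Definition nb {R} (b u : gpt R) := [|| is_x2 b u, is_x3 b u | is_omega b u].

Lemma nb_tadj {R} (b u w : gpt R) : nb b u -> nb b w -> tadj u w.
Proof.
rewrite /nb /is_x2 /is_x3 /is_omega /tadj.
move: (col u) (row u) (col w) (row w) (col b) (row b) => x y z t c r.
by case/or3P => /andP[/eqP-> /eqP->]; case/or3P => /andP[/eqP-> /eqP->];
  rewrite /tadjN; repeat dec1.
Qed.

Lemma grid_tadj {R} (u v : gpt R) : grid_e u v -> tadj u v.
Proof.
rewrite /grid_e /tadj.
move: (col u) (row u) (col v) (row v) => x y z t.
case/orP => [/andP[/eqP-> /orP[/eqP<-|/eqP<-]]|/andP[/eqP-> /orP[/andP[/eqP<- _]|/andP[/eqP<- _]]]];
  rewrite /tadjN; repeat dec1; try done.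
Qed.

Lemma mixed_nb {R} (u b : gpt R) k : mixed_e u b k -> nb b u.
Proof.
by rewrite /mixed_e /nb => /and3P[_ _ /or3P[/andP[-> _]|/andP[-> _]|->]]; rewrite ?orbT.
Qed.

Lemma connect_inv (T : finType) (e : rel T) (P : pred T) x y :
  (forall a b, P a -> e a b -> P b) -> connect e x y -> P x -> P y.
Proof.
move=> H /connectP [p hp ->]; elim: p x hp => //= z p IH x /andP[exz hp] Px.
exact: IH hp (H _ _ Px exz).
Qed.

Definition Inv {R} (U : {set cvertex R}) (z : cvertex R) : bool :=
  (z \in U) && match z with inl _ => true | inr (b, _) => [exists w, nb b w && (inl w \in U)] end.

Definition piU {R} (U : {set cvertex R}) (z : cvertex R) : gpt R :=
  match z with inl u => u | inr (b, _) => odflt b [pick w | nb b w && (inl w \in U)] end.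

Lemma piU_inr {R} (U : {set cvertex R}) b k : Inv U (inr (b, k)) ->
  nb b (piU U (inr (b, k))) && (inl (piU U (inr (b, k))) \in U).
Proof.
rewrite /Inv /piU => /andP[_ /existsP[w hw]].
by case: pickP => [w' ->|/(_ w)]; rewrite ?hw.
Qed.

Lemma piU_in {R} (U : {set cvertex R}) z : Inv U z -> inl (piU U z) \in U.
Proof.
case: z => [u|[b k]] hI; first by case/andP: hI.
by case/andP: (piU_inr hI).
Qed.

Lemma inv_step {R} (U : {set cvertex R}) z z' :
  Inv U z -> induced_rel (@cw_e R) U z z' -> Inv U z'.
Proof.
rewrite /induced_rel /= => hI /and3P[hz hz' he].
rewrite /Inv hz' /=; case: z' hz' he => [v|[b k]] //= hz'.
case: z hz hI => [u|[b' k']] hz hI /=.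
  by move/mixed_nb => hn; apply/existsP; exists u; rewrite hn hz.
by case/and4P => _ /eqP <- _ _; case/andP: hI.
Qed.

Lemma tadj_step {R} (U : {set cvertex R}) z z' :
  Inv U z -> Inv U z' -> cw_e z z' -> tadj (piU U z) (piU U z').
Proof.
case: z => [u|[b k]]; case: z' => [v|[b' k']] /= hI hI'.
- by case/and4P => _ _ /grid_tadj.
- move/mixed_nb => hn; case/andP: (piU_inr hI') => hn' _; exact: nb_tadj hn hn'.
- move/mixed_nb => hn; case/andP: (piU_inr hI) => hn' _; exact: nb_tadj hn' hn.
- case/and4P => _ /eqP eb _ _; subst b'.
  case/andP: (piU_inr hI) => hn _; case/andP: (piU_inr hI') => hn' _.
  exact: nb_tadj hn hn'.
Qed.

Lemma walk_map {R} (U : {set cvertex R}) z p : Inv U z ->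
  path (induced_rel (@cw_e R) U) z p ->
  path tadj (piU U z) (map (piU U) p) /\ (forall w, w \in z :: p -> Inv U w).
Proof.
elim: p z => [|y p IH] z hI /=.
  by move=> _; split=> // w; rewrite inE => /eqP->.
case/andP=> hzy hp.
have hIy := inv_step hI hzy.
have [h1 h2] := IH y hIy hp.
split; first by rewrite h1 andbT; apply: tadj_step hI hIy _; case/and3P: hzy.
by move=> w; rewrite in_cons => /orP[/eqP->|]; last exact: h2.
Qed.


Definition code {R} (b : gpt R) (y : cvertex R) : nat :=
  match y with
  | inl u => if is_x2 b u then 0 else if is_x3 b u then 1 else 2
  | inr (_, j) => 3 + j
  end.
Definition nbish {R} (b : gpt R) (y : cvertex R) : bool :=
  match y with inl u => nb b u | inr (b', _) => b' == b end.

Definition adjB (k j : nat) := (k != j) && ~~ ((k + j == 3) && ((k == 0) || (j == 0))).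
Definition hasadj a0 a1 a2 a3 j :=
  [|| a0 && adjB 0 j, a1 && adjB 1 j, a2 && adjB 2 j | a3 && adjB 3 j].
Definition aN (a0 a1 a2 a3 : bool) j := nth false [:: a0; a1; a2; a3] j.
Definition allowed a0 a1 a2 a3 c :=
  [|| (c == 0) && a0, (c == 1) && a3, c == 2
    | [&& 3 <= c < 7, ~~ aN a0 a1 a2 a3 (c - 3) & hasadj a0 a1 a2 a3 (c - 3)]].

Lemma allowed_size a0 a1 a2 a3 : ~~ [&& a0, ~~ a1, ~~ a2 & a3] ->
  size [seq c <- iota 0 7 | allowed a0 a1 a2 a3 c] <= 4.
Proof. by case: a0; case: a1; case: a2; case: a3. Qed.

Lemma x2_uniq {R} (b u u' : gpt R) : is_x2 b u -> is_x2 b u' -> u = u'.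
Proof.
by rewrite /is_x2 => /andP[/eqP h1 /eqP h2] /andP[/eqP h3 /eqP h4]; apply: gpt_eq; lia.
Qed.
Lemma x3_uniq {R} (b u u' : gpt R) : is_x3 b u -> is_x3 b u' -> u = u'.
Proof.
by rewrite /is_x3 => /andP[/eqP h1 /eqP h2] /andP[/eqP h3 /eqP h4]; apply: gpt_eq; lia.
Qed.
Lemma om_uniq {R} (b u u' : gpt R) : is_omega b u -> is_omega b u' -> u = u'.
Proof.
by rewrite /is_omega => /andP[/eqP h1 /eqP h2] /andP[/eqP h3 /eqP h4]; apply: gpt_eq; lia.
Qed.
Lemma x3_not_x2 {R} (b u : gpt R) : is_x3 b u -> is_x2 b u = false.
Proof. rewrite /is_x3 /is_x2 => /andP[/eqP h1 /eqP h2]; apply/negbTE; rewrite negb_and; apply/orP; left; apply/eqP; lia. Qed.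
Lemma om_not_x2 {R} (b u : gpt R) : is_omega b u -> is_x2 b u = false.
Proof. rewrite /is_omega /is_x2 => /andP[/eqP h1 /eqP h2]; apply/negbTE; rewrite negb_and; apply/orP; right; apply/eqP; lia. Qed.
Lemma om_not_x3 {R} (b u : gpt R) : is_omega b u -> is_x3 b u = false.
Proof. rewrite /is_omega /is_x3 => /andP[/eqP h1 /eqP h2]; apply/negbTE; rewrite negb_and; apply/orP; right; apply/eqP; lia. Qed.

Lemma code_inj {R} (b : gpt R) y y' : nbish b y -> nbish b y' -> code b y = code b y' -> y = y'.
Proof.
case: y => [u|[b1 j]]; case: y' => [u'|[b2 j']] //=.
- rewrite /nb => /or3P[h|h|h] /or3P[h'|h'|h'];
  rewrite ?h ?h' ?(x3_not_x2 h) ?(x3_not_x2 h') ?(om_not_x2 h) ?(om_not_x2 h')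
          ?(om_not_x3 h) ?(om_not_x3 h') //= => _.
  + by rewrite (x2_uniq h h').
  + by rewrite (x3_uniq h h').
  + by rewrite (om_uniq h h').
- by move=> _ _; case: ifP => _ //; case: ifP.
- by move=> _ _; case: ifP => _ //; case: ifP.
- move=> /eqP-> /eqP-> [e]; congr (inr (_, _)); exact: val_inj.
Qed.

Lemma aN_ord (a : 'I_4 -> bool) (j : 'I_4) :
  aN (a (inord 0)) (a (inord 1)) (a (inord 2)) (a (inord 3)) j = a j.
Proof.
case: j => [[|[|[|[|m]]]] hm] //=; congr a; apply: val_inj; by rewrite /= inordK.
Qed.

Lemma neigh_allowed {R} (b : gpt R) (a : 'I_4 -> bool) (j : 'I_4) y :
  a j -> (forall j', y = inr (b, j') -> a j' = false) ->
  cw_e (inr (b, j)) y ->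
  allowed (a (inord 0)) (a (inord 1)) (a (inord 2)) (a (inord 3)) (code b y) && nbish b y.
Proof.
move=> haj hy; rewrite -(aN_ord a j) in haj.
case: y hy => [u|[b' j']] hy /=.
  move=> hm; rewrite (mixed_nb hm) andbT; move: hm.
  rewrite /mixed_e => /and3P[_ _ /or3P[/andP[h /eqP hj]|/andP[h /eqP hj]|h]].
  - by move: haj; rewrite hj h /allowed /aN /= => ->.
  - by move: haj; rewrite hj (x3_not_x2 h) h /allowed /aN /= => ->.
  - by rewrite (om_not_x2 h) (om_not_x3 h) /allowed /=.
case/and4P=> _ /eqP eb hne hadj; subst b'; rewrite eqxx andbT.
have hj' := hy j' erefl; rewrite -(aN_ord a j') in hj'.
rewrite /allowed; apply/orP; right; apply/orP; right; apply/orP; right.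
have ltj' := ltn_ord j'.
rewrite addKn hj' /=; apply/andP; split; first by lia.
move: haj hne hadj; rewrite /hasadj /adjB /aN; clear hy.
case: j => [[|[|[|[|m]]]] hm] //=; case: j' ltj' hj' => [[|[|[|[|m']]]] hm'] //= _ _;
  by move=> -> _ _; rewrite ?orbT.
Qed.

Lemma wall_in {R} (B : 'I_6 -> {set cvertex R}) :
  (forall k, B k != set0) ->
  (forall k, connected_set (@cw_e R) (B k)) ->
  (forall k l, k != l -> [disjoint B k & B l]) ->
  (forall k l, k != l -> exists x y, [/\ x \in B k, y \in B l & cw_e x y]) ->
  forall i, exists u, inl u \in B i.
Proof.
move=> hne hcon hdis hadj i.
case: (boolP [exists u, inl u \in B i]) => [/existsP//|/existsPn hno].
exfalso; case/set0Pn: (hne i) => z0 hz0.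
case: z0 hz0 => [u0|[b k0]] hz0; first by move: (hno u0); rewrite hz0.
pose P := fun z : cvertex R => if z is inr (b', _) then b' == b else false.
have step : forall x c, P x -> induced_rel (@cw_e R) (B i) x c -> P c.
  move=> x c; case: x => // -[b' j'] /= /eqP eb /and3P[_ hc he]; subst b'.
  case: c hc he => [v|[b'' j'']] hc he; first by move: (hno v); rewrite hc.
  by case/and4P: he => _ /eqP e _ _; rewrite /P e.
have hall : forall z, z \in B i -> exists j, z = inr (b, j).
  move=> z hz.
  have := @connect_inv _ _ P _ _ step (hcon i _ _ hz0 hz) (eqxx b).
  by case: z {hz} => [v|[b' j]] //= /eqP ->; exists j.
pose a := fun j : 'I_4 => inr (b, j) \in B i.
have hf : forall l : 'I_6, exists y : cvertex R, l != i ->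
    [/\ y \in B l, y \notin B i & exists2 j, a j & cw_e (inr (b, j)) y].
  move=> l; case: (eqVneq l i) => [_|hli]; first by exists (inr (b, k0)).
  have hil : i != l by rewrite eq_sym.
  have [x [y [hx hy hxy]]] := hadj i l hil.
  exists y => _; split => //; first by rewrite (disjointFr (hdis l i hli) hy).
  by have [j ej] := hall x hx; subst x; exists j.
have [f hf'] := fin_all_exists hf.
have hcode : forall l, l != i ->
    allowed (a (inord 0)) (a (inord 1)) (a (inord 2)) (a (inord 3)) (code b (f l))
    && nbish b (f l).
  move=> l hli; have [hfl hfi [j haj hcw]] := hf' l hli.
  apply: (neigh_allowed haj _ hcw) => j' e; rewrite /a -e; exact: negbTE hfi.
have hAD : ~~ [&& a (inord 0), ~~ a (inord 1), ~~ a (inord 2) & a (inord 3)].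
  apply/negP => /and4P[h0 h1 h2 h3].
  pose Q := fun z : cvertex R => z == inr (b, inord 0).
  have stepQ : forall x c, Q x -> induced_rel (@cw_e R) (B i) x c -> Q c.
    move=> x c /eqP -> /and3P[_ hc he].
    have [j ej] := hall c hc; subst c.
    have haj : a j := hc.
    exfalso; clear hc; move: he; rewrite -(aN_ord a j) in haj.
    rewrite /= -val_eqE /= inordK //.
    move: haj; rewrite /aN.
    case: j => [[|[|[|[|m]]]] hm] //=; rewrite ?(negbTE h1) ?(negbTE h2) //.
    all: try by move=> _ /and3P[].
  have := connect_inv stepQ (hcon i _ _ h0 h3) (eqxx _).
  move/eqP => [] /(f_equal val); rewrite /= !inordK //.
pose s := [seq code b (f l) | l <- enum (predC1 i)].
have hu : uniq s.
  rewrite map_inj_in_uniq ?enum_uniq // => l l' hl hl' e.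
  rewrite !mem_enum /= in hl hl'.
  case: (eqVneq l l') => // hll'.
  have [h1 _ _] := hf' l hl; have [h2 _ _] := hf' l' hl'.
  have /andP[_ n1] := hcode l hl; have /andP[_ n2] := hcode l' hl'.
  have ef := code_inj n1 n2 e.
  by move: (disjointFr (hdis l l' hll') h1); rewrite ef h2.
have hs : {subset s <= [seq c <- iota 0 7 |
          allowed (a (inord 0)) (a (inord 1)) (a (inord 2)) (a (inord 3)) c]}.
  move=> c /mapP[l hl ->]; rewrite mem_enum /= in hl.
  rewrite mem_filter mem_iota; case/andP: (hcode l hl) => -> _ /=.
  case: (f l) => [u|[b' j]] /=; first by case: ifP => _ //; case: ifP.
  by have := ltn_ord j; lia.
have h := uniq_leq_size hu hs; rewrite size_map -cardE cardC1 card_ord in h.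
by have := leq_trans h (allowed_size hAD).
Qed.


Definition ltq {R} (u w : gpt R) : nat := ltp u w.

Lemma WWq {R} (a c : gpt R) p q : path tadj a p -> path tadj c q ->
  (forall x, x \in a :: p -> x \notin c :: q) ->
  ~~ odd (X a p c + X a p (last c q) + X c q a + X c q (last a p)
          + ltq c a + ltq (last c q) a + ltq c (last a p) + ltq (last c q) (last a p)).
Proof. exact: WW. Qed.

Lemma ltq_anti {R} (u w : gpt R) : u != w -> ltq u w + ltq w u = 1.
Proof.
move=> huw; rewrite /ltq /ltp /ltN.
case: (ltngtP (row u) (row w)) => h1 //=.
case: (ltngtP (col u) (col w)) => h2 //=.
by move/eqP: huw; case; apply: gpt_eq.
Qed.

Lemma even_ex n : ~~ odd n -> exists m, n = 2 * m.
Proof.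
move=> h; exists n./2; rewrite -[n in LHS]odd_double_half (negbTE h) add0n.
by rewrite -muln2 mulnC.
Qed.

Lemma connect_mono (T : finType) (e e' : rel T) : subrel e e' -> subrel (connect e) (connect e').
Proof. move=> h; apply: connect_sub => x y /h; exact: connect1. Qed.

Theorem mainTheorem8 (R : nat) :
  2 <= R -> ~ has_clique_minor (cw_vertices R) (@cw_e R) 6.
Proof.
move=> _ [B [hne hsub hcon hdis hadj]].
have hw := wall_in hne hcon hdis hadj.
have [r hr] := fin_all_exists hw.
have hwalk : forall i j : 'I_6, i != j -> exists p : seq (gpt R),
    [/\ path tadj (r i) p, last (r i) p = r j
      & forall x, x \in r i :: p -> (inl x \in B i) || (inl x \in B j)].
  move=> i j hij; pose U := B i :|: B j.
  have sub : forall k, B k \subset U ->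
      subrel (induced_rel (@cw_e R) (B k)) (induced_rel (@cw_e R) U).
    move=> k /subsetP hk a c /and3P[ha hc he].
    by rewrite /induced_rel /= (hk _ ha) (hk _ hc).
  have hiU : B i \subset U by apply/subsetP => z hz; rewrite inE hz.
  have hjU : B j \subset U by apply/subsetP => z hz; rewrite inE hz orbT.
  have hc : connect (induced_rel (@cw_e R) U) (inl (r i)) (inl (r j)).
    have [x [y [hx hy hxy]]] := hadj i j hij.
    apply: connect_trans (connect_mono (sub i hiU) (hcon i _ _ (hr i) hx)) _.
    apply: connect_trans (connect_mono (sub j hjU) (hcon j _ _ hy (hr j))).
    apply: connect1; rewrite /induced_rel /= hxy andbT.
    by rewrite (subsetP hiU _ hx) (subsetP hjU _ hy).
  case/connectP: hc => p hp hlast.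
  have hI0 : Inv U (inl (r i)) by rewrite /Inv inE hr.
  have [hpath hall] := walk_map hI0 hp.
  exists (map (piU U) p); split => //.
    by rewrite (_ : r i = piU U (inl (r i))) // last_map -hlast.
  move=> x; rewrite (_ : r i :: map (piU U) p = map (piU U) (inl (r i) :: p)) //.
  case/mapP => z hz ->; have := piU_in (hall z hz); by rewrite inE.
have hrd : forall i j, i != j -> r i != r j.
  move=> i j hij; apply/eqP => e.
  by move: (disjointFr (hdis i j hij) (hr i)); rewrite e hr.
have disj4 : forall i j k l, i != k -> i != l -> j != k -> j != l ->
    forall s t : seq (gpt R), (forall x, x \in s -> (inl x \in B i) || (inl x \in B j)) ->
    (forall x, x \in t -> (inl x \in B k) || (inl x \in B l)) ->
    forall x, x \in s -> x \notin t.
  move=> i j k l h1 h2 h3 h4 s t hs ht x hx; apply/negP => hxt.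
  case/orP: (hs x hx) => ha; case/orP: (ht x hxt) => hb.
  - by move: (disjointFr (hdis _ _ h1) ha); rewrite hb.
  - by move: (disjointFr (hdis _ _ h2) ha); rewrite hb.
  - by move: (disjointFr (hdis _ _ h3) ha); rewrite hb.
  - by move: (disjointFr (hdis _ _ h4) ha); rewrite hb.

pose o0 : 'I_6 := @Ordinal 6 0 isT.
pose o1 : 'I_6 := @Ordinal 6 1 isT.
pose o2 : 'I_6 := @Ordinal 6 2 isT.
pose o3 : 'I_6 := @Ordinal 6 3 isT.
pose o4 : 'I_6 := @Ordinal 6 4 isT.
have [p01 [hp01 hl01 hm01]] := hwalk o0 o1 isT.
have [p02 [hp02 hl02 hm02]] := hwalk o0 o2 isT.
have [p03 [hp03 hl03 hm03]] := hwalk o0 o3 isT.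
have [p04 [hp04 hl04 hm04]] := hwalk o0 o4 isT.
have [p12 [hp12 hl12 hm12]] := hwalk o1 o2 isT.
have [p13 [hp13 hl13 hm13]] := hwalk o1 o3 isT.
have [p14 [hp14 hl14 hm14]] := hwalk o1 o4 isT.
have [p23 [hp23 hl23 hm23]] := hwalk o2 o3 isT.
have [p24 [hp24 hl24 hm24]] := hwalk o2 o4 isT.
have [p34 [hp34 hl34 hm34]] := hwalk o3 o4 isT.
have /even_ex [m0 E0] := WWq hp01 hp23 (disj4 o0 o1 o2 o3 isT isT isT isT _ _ hm01 hm23).
rewrite hl01 hl23 in E0.
have /even_ex [m1 E1] := WWq hp02 hp13 (disj4 o0 o2 o1 o3 isT isT isT isT _ _ hm02 hm13).
rewrite hl02 hl13 in E1.
have /even_ex [m2 E2] := WWq hp03 hp12 (disj4 o0 o3 o1 o2 isT isT isT isT _ _ hm03 hm12).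
rewrite hl03 hl12 in E2.
have /even_ex [m3 E3] := WWq hp01 hp24 (disj4 o0 o1 o2 o4 isT isT isT isT _ _ hm01 hm24).
rewrite hl01 hl24 in E3.
have /even_ex [m4 E4] := WWq hp02 hp14 (disj4 o0 o2 o1 o4 isT isT isT isT _ _ hm02 hm14).
rewrite hl02 hl14 in E4.
have /even_ex [m5 E5] := WWq hp04 hp12 (disj4 o0 o4 o1 o2 isT isT isT isT _ _ hm04 hm12).
rewrite hl04 hl12 in E5.
have /even_ex [m6 E6] := WWq hp01 hp34 (disj4 o0 o1 o3 o4 isT isT isT isT _ _ hm01 hm34).
rewrite hl01 hl34 in E6.
have /even_ex [m7 E7] := WWq hp03 hp14 (disj4 o0 o3 o1 o4 isT isT isT isT _ _ hm03 hm14).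
rewrite hl03 hl14 in E7.
have /even_ex [m8 E8] := WWq hp04 hp13 (disj4 o0 o4 o1 o3 isT isT isT isT _ _ hm04 hm13).
rewrite hl04 hl13 in E8.
have /even_ex [m9 E9] := WWq hp02 hp34 (disj4 o0 o2 o3 o4 isT isT isT isT _ _ hm02 hm34).
rewrite hl02 hl34 in E9.
have /even_ex [m10 E10] := WWq hp03 hp24 (disj4 o0 o3 o2 o4 isT isT isT isT _ _ hm03 hm24).
rewrite hl03 hl24 in E10.
have /even_ex [m11 E11] := WWq hp04 hp23 (disj4 o0 o4 o2 o3 isT isT isT isT _ _ hm04 hm23).
rewrite hl04 hl23 in E11.
have /even_ex [m12 E12] := WWq hp12 hp34 (disj4 o1 o2 o3 o4 isT isT isT isT _ _ hm12 hm34).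
rewrite hl12 hl34 in E12.
have /even_ex [m13 E13] := WWq hp13 hp24 (disj4 o1 o3 o2 o4 isT isT isT isT _ _ hm13 hm24).
rewrite hl13 hl24 in E13.
have /even_ex [m14 E14] := WWq hp14 hp23 (disj4 o1 o4 o2 o3 isT isT isT isT _ _ hm14 hm23).
rewrite hl14 hl23 in E14.
have A01 := ltq_anti (hrd o0 o1 isT).
have A02 := ltq_anti (hrd o0 o2 isT).
have A03 := ltq_anti (hrd o0 o3 isT).
have A04 := ltq_anti (hrd o0 o4 isT).
have A12 := ltq_anti (hrd o1 o2 isT).
have A13 := ltq_anti (hrd o1 o3 isT).
have A14 := ltq_anti (hrd o1 o4 isT).
have A23 := ltq_anti (hrd o2 o3 isT).
have A24 := ltq_anti (hrd o2 o4 isT).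
have A34 := ltq_anti (hrd o3 o4 isT).
lia.
Qed.
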